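(* Let $E_k[1/k]=\sum_k g(k)/k$. (i) Under Public WOM, with $p_2=1/2$ and cutoff $\underline{k}=k_{f\min}$ (so that all informed consumers pass on the information, $L=1$, $\Gamma=1$, and the bonus is $b=c/(k_{f\min}\phi(1,1/2))$), the seller's profit $(1-\beta)+\beta\,(p_2-b)(1-p_2)\Gamma$ is positive if and only if $E_k[1/k]>\frac{4\beta}{4-3\beta}\cdot\frac{c}{k_{f\min}}$. (ii) Under Private WOM, with $p_2=1/2$ and $L=1$ (bonus $b_{pr}=c_{pr}/\phi(1,1/2)$), the seller's profit is positive whenever $E_k[1/k]>\frac{4\beta}{4-3\beta}\,c_{pr}$.
   Context: A seller (zero marginal cost) faces a unit mass of unit-demand consumers: a fraction $1-\beta\in(0,1)$ informed with reservation value 1 (charged $p_1=1$), and a fraction $\beta$ uninformed with reservation value $v\sim U[0,1]$ (charged $p_2$). Informed consumers are linked to uninformed ones by a directed bipartite network with out-degree distribution $f$ (informed) and in-degree distribution $g$ (uninformed) on the positive integers, with $(1-\beta)\sum_k kf(k)=\beta\sum_k kg(k)$; $k_{f\min}$ is the smallest degree in the support of $f$. With a fraction $L$ of active links, $\Gamma(L)=1-\sum_k g(k)(1-L)^k$ and $\phi(L,p_2)=(1-p_2)\sum_k g(k)\frac{1-(1-L)^k}{kL}$ (so $\phi(1,1/2)=E_k[1/k]/2$). Profit with per-referral bonus $b$ is $(1-\beta)+\beta(p_2-b)(1-p_2)\Gamma(L)$. Public WOM: an informed consumer of out-degree $k$ informs all out-neighbours at lump-sum cost $c>0$ iff $kb\phi(L,p_2)\ge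 c$; cutoff $\underline{k}$ gives $L=\sum_{k\ge\underline{k}}f(k)$ and is implemented by $b=c/(\underline{k}\phi(L,p_2))$. Private WOM: each contact costs $c_{pr}>0$, and a bonus $b_{pr}$ induces fraction $L$ of active links with $\phi(L,p_2)b_{pr}=c_{pr}$. *)

(* Defs.v *)
From Stdlib Require Import Reals.
From Coquelicot Require Import Coquelicot.
Open Scope R_scope.

(* Degree distributions are functions nat -> R; degrees are positive
   integers, so distributions put zero mass at 0. Infinite supports are
   allowed; sums are Coquelicot series. *)

Definition Ek_inv (g : nat -> R) : R := Series (fun k => g k / INR k).

Definition Gamma (g : nat -> R) (L : R) : R :=
  1 - Series (fun k => g k * (1 - L) ^ k).

Definition phi (g : nat -> R) (L p2 : R) : R :=
  (1 - p2) * Series (fun k => g k * (1 - (1 - L) ^ k) / (INR k * L)).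

Definition profit (beta p2 b Gam : R) : R :=
  (1 - beta) + beta * (p2 - b) * (1 - p2) * Gam.

(* Public WOM: fraction of active links for cutoff kc *)
Definition L_cut (f : nat -> R) (kc : nat) : R :=
  Series (fun k => if (kc <=? k)%nat then f k else 0).

Definition b_pub (f g : nat -> R) (c : R) (kc : nat) (p2 : R) : R :=
  c / (INR kc * phi g (L_cut f kc) p2).

Definition b_priv (g : nat -> R) (cpr L p2 : R) : R := cpr / phi g L p2.

Definition degree_dist (h : nat -> R) : Prop :=
  (forall k, 0 <= h k) /\ h 0%nat = 0 /\ is_series h 1.

(* Main.v *)
Require Import Defs.
From Stdlib Require Import Reals.
From Coquelicot Require Import Coquelicot.
From Stdlib Require Import Lra Lia Classical Arith.
Open Scope R_scope.

Lemma Series_zero : Series (fun _ => 0) = 0.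
Proof. rewrite (Series_ext _ (fun n => 0 * 0)) by (intros; ring).
 rewrite Series_scal_l. ring. Qed.

Lemma Series_pos_term (h : nat -> R) (k0 : nat) :
  (forall n, 0 <= h n) -> ex_series h -> h k0 <= Series h.
Proof.
  intros Hp Hex.
  rewrite (Series_incr_n h (S k0)); [| lia | exact Hex].
  simpl pred.
  assert (0 <= Series (fun k => h (S k0 + k)%nat)).
  { rewrite <- Series_zero. apply Series_le.
    - intros n; split; [lra| apply Hp].
    - apply (ex_series_incr_n h (S k0)) in Hex. exact Hex. }
  assert (h k0 <= sum_f_R0 h k0).
  { destruct k0; simpl; [lra|].
    pose proof (cond_pos_sum h k0 Hp). lra. }
  lra.
Qed.

Lemma Ek_pos (g : nat -> R) : degree_dist g -> 0 < Ek_inv g.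
Proof.
  intros [Hp [H0 Hs]].
  assert (Hex : ex_series (fun k => g k / INR k)).
  { apply (@ex_series_le R_AbsRing R_CompleteNormedModule _ g).
    - intros n. change norm with Rabs; simpl. rewrite Rabs_pos_eq.
      + destruct n. { simpl. rewrite H0. unfold Rdiv; lra. }
        rewrite S_INR. pose proof (pos_INR n).
        pose proof (Hp (S n)).
        apply (Rmult_le_reg_r (INR n + 1)); [lra|].
        unfold Rdiv. rewrite Rmult_assoc, Rinv_l by lra. nra.
      + destruct n. { simpl. rewrite H0. unfold Rdiv; lra. }
        apply Rdiv_le_0_compat; [apply Hp| rewrite S_INR; pose proof (pos_INR n); lra].
    - exists 1; exact Hs. }
  destruct (classic (exists k, 0 < g k)) as [[k Hk]|Hn].
  - destruct k. { rewrite H0 in Hk; lra. }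
    apply Rlt_le_trans with (g (S k) / INR (S k)).
    + apply Rdiv_lt_0_compat; [lra| rewrite S_INR; pose proof (pos_INR k); lra].
    + unfold Ek_inv. apply (Series_pos_term (fun k => g k / INR k)); [|exact Hex].
      intros n. destruct n. { simpl. rewrite H0. unfold Rdiv; lra. }
      apply Rdiv_le_0_compat; [apply Hp| rewrite S_INR; pose proof (pos_INR n); lra].
  - exfalso.
    assert (Series g = 0).
    { rewrite <- Series_zero. apply Series_ext. intros n.
      pose proof (Hp n). destruct (Rle_lt_dec (g n) 0); [lra|].
      exfalso; apply Hn; eauto. }
    rewrite (is_series_unique _ _ Hs) in H. lra.
Qed.

Theorem corollary1 (f g : nat -> R) (beta c cpr : R) (kfmin : nat) :
  0 < 1 - beta < 1 ->
  degree_dist f -> degree_dist g ->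
  (1 - beta) * Series (fun k => INR k * f k) = beta * Series (fun k => INR k * g k) ->
  0 < f kfmin -> (forall k, (k < kfmin)%nat -> f k = 0) ->
  0 < c -> 0 < cpr ->
  (* (i) Public WOM, p2 = 1/2, cutoff kfmin *)
  (0 < profit beta (1/2) (b_pub f g c kfmin (1/2)) (Gamma g (L_cut f kfmin))
     <-> Ek_inv g > 4 * beta / (4 - 3 * beta) * (c / INR kfmin))
  /\
  (* (ii) Private WOM, p2 = 1/2, L = 1 *)
  (Ek_inv g > 4 * beta / (4 - 3 * beta) * cpr ->
     0 < profit beta (1/2) (b_priv g cpr 1 (1/2)) (Gamma g 1)).
Proof.
  intros Hb Hf Hg _ Hfk Hlt Hc Hcpr.
  pose proof (Ek_pos g Hg) as HE.
  destruct Hf as [Hfp [Hf0 Hfs]].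
  destruct Hg as [Hgp [Hg0 Hgs]].
  assert (HL : L_cut f kfmin = 1).
  { unfold L_cut. rewrite <- (is_series_unique _ _ Hfs). apply Series_ext.
    intros n. destruct (Nat.leb_spec kfmin n); [reflexivity|].
    symmetry; apply Hlt; lia. }
  assert (HG : Gamma g 1 = 1).
  { unfold Gamma. rewrite (Series_ext _ (fun _ => 0)), Series_zero; [ring|].
    intros n. destruct n. { rewrite Hg0; ring. }
    replace (1 - 1) with 0 by ring. rewrite pow_i by lia. ring. }
  assert (Hphi : phi g 1 (1/2) = Ek_inv g / 2).
  { unfold phi, Ek_inv. rewrite (Series_ext _ (fun k => g k / INR k)); [field|].
    intros n. destruct n. { rewrite Hg0. unfold Rdiv; ring. }
    replace (1 - 1) with 0 by ring. rewrite pow_i by lia. unfold Rdiv.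
    rewrite Rmult_1_r. ring. }
  assert (Hk : 0 < INR kfmin).
  { destruct kfmin. { rewrite Hf0 in Hfk; lra. }
    rewrite S_INR; pose proof (pos_INR kfmin); lra. }
  set (E := Ek_inv g) in *.
  assert (H43 : 0 < 4 - 3 * beta) by lra.
  split.
  - unfold profit, b_pub. rewrite HL, HG, Hphi.
    replace (4 * beta / (4 - 3 * beta) * (c / INR kfmin))
      with (4 * beta * c / ((4 - 3 * beta) * INR kfmin)) by (field; lra).
    replace ((1 - beta) + beta * (1 / 2 - c / (INR kfmin * (E / 2))) * (1 - 1 / 2) * 1)
      with (((4 - 3 * beta) * INR kfmin * E - 4 * beta * c) / (4 * INR kfmin * E))
      by (field; lra).
    assert (0 < (4 - 3 * beta) * INR kfmin) by nra.
    split; intros H1.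
    + unfold Rgt. apply (Rmult_lt_reg_r ((4 - 3 * beta) * INR kfmin)); [lra|].
      unfold Rdiv. rewrite Rmult_assoc, Rinv_l by lra.
      assert (0 < (4 - 3 * beta) * INR kfmin * E - 4 * beta * c); [|nra].
      apply (Rmult_lt_reg_r (/ (4 * INR kfmin * E))).
      { apply Rinv_0_lt_compat; nra. }
      rewrite Rmult_0_l. exact H1.
    + apply Rdiv_lt_0_compat; [|nra].
      unfold Rgt in H1.
      apply (Rmult_lt_compat_r ((4 - 3 * beta) * INR kfmin)) in H1; [|lra].
      unfold Rdiv in H1. rewrite Rmult_assoc, Rinv_l in H1 by lra. nra.
  - intros H. unfold profit, b_priv. rewrite HG, Hphi.
    replace ((1 - beta) + beta * (1 / 2 - cpr / (E / 2)) * (1 - 1 / 2) * 1)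
      with (((4 - 3 * beta) * E - 4 * beta * cpr) / (4 * E)) by (field; lra).
    apply Rdiv_lt_0_compat; [|nra].
    unfold Rgt in H.
    apply (Rmult_lt_compat_r (4 - 3 * beta)) in H; [|lra].
    replace (4 * beta / (4 - 3 * beta) * cpr * (4 - 3 * beta)) with (4 * beta * cpr) in H
      by (field; lra). nra.
Qed.
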